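(* For every prime $p\equiv 2 \pmod 3$, \begin{align*} \sum_{k=0}^{(p+1)/3}(6k-1)(18k^2-6k+1)\frac{(-1/3)^4_k}{k!^4}\equiv0\pmod{p^4}. \end{align*}
   Context: $(x)_0=1$ and $(x)_k=x(x+1)\cdots(x+k-1)$ is the Pochhammer symbol; $(x)_k^4$ means $((x)_k)^4$. The congruence of rational numbers modulo $p^4$ means the difference, written in lowest terms, has numerator divisible by $p^4$ and denominator not divisible by $p$. *)

(* Defs.v *)
From mathcomp Require Import all_boot all_order all_algebra.
Set Implicit Arguments. Unset Strict Implicit. Unset Printing Implicit Defensive.
Import Order.TTheory GRing.Theory Num.Theory.
Local Open Scope ring_scope.

Definition pochhammer (x : rat) (k : nat) : rat :=
  \prod_(i < k) (x + i%:R).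

(* Congruence of rationals modulo an integer m: the difference a - b, written
   in lowest terms (numq/denq are coprime, denq > 0), has numerator divisible
   by m and denominator coprime to m.  For m = p^4 with p prime, "coprime to
   p^4" is the same as "not divisible by p". *)
Definition rat_cong_mod (a b : rat) (p e : nat) : Prop :=
  ((p ^ e)%:Z %| numq (a - b))%Z /\ ~~ ((p%:Z) %| denq (a - b))%Z.

(* Main.v *)
Require Import Defs.
From mathcomp Require Import all_boot all_order all_algebra.
From mathcomp Require Import ring zify.
Import Order.TTheory GRing.Theory Num.Theory.
Local Open Scope ring_scope.

Lemma key (p : nat) (x : rat) (y : int) (d : nat) : prime p -> ~~ (p %| d)%N ->
  x * d%:R = (p ^ 4)%:R * y%:~R -> rat_cong_mod x 0 p 4.
Proof.
move=> pp pd E; rewrite /rat_cong_mod subr0.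
have cpd : coprimez (Posz (p ^ 4)) (Posz d).
  by rewrite coprimezE /= coprime_pexpl // prime_coprime.
have E2 : numq x * Posz d = Posz (p ^ 4) * y * denq x.
  apply: (intr_inj (R := rat)).
  rewrite !intrM.
  have dq : (denq x)%:~R != 0 :> rat by rewrite intr_eq0 denq_neq0.
  rewrite -[x]divq_num_den in E.
  change ((Posz (p^4))%:~R : rat) with ((p^4)%:R : rat).
  change ((Posz d)%:~R : rat) with (d%:R : rat).
  transitivity ((numq x)%:~R / (denq x)%:~R * d%:R * (denq x)%:~R : rat).
    by field.
  by rewrite E.
split.
  by rewrite -(Gauss_dvdzl _ cpd) E2 -mulrA dvdz_mulr.
apply/negP => pD.
have : (denq x %| numq x * Posz d)%Z by rewrite E2 dvdz_mull.
rewrite Gauss_dvdzr; last by rewrite coprimezE coprime_sym coprime_num_den.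
move=> Dd; move/negP: pd; apply.
have := dvdz_trans pD Dd.
by rewrite /dvdz /=.
Qed.

Definition aa : rat := - (1 / 3).

Lemma poch_rec (x : rat) m : pochhammer x m.+1 = pochhammer x m * (x + m%:R).
Proof. by rewrite /pochhammer big_ord_recr. Qed.

Lemma telescope m :
  \sum_(0 <= k < m)
       (6 * k%:R - 1) * (18 * k%:R ^+ 2 - 6 * k%:R + 1)
       * (pochhammer aa k) ^+ 4 / (k`!%:R) ^+ 4
  = -81 * (pochhammer aa m * m%:R / m`!%:R) ^+ 4.
Proof.
elim: m => [|m IH]; first by rewrite big_geq // mulr0 mul0r expr0n mulr0.
rewrite big_nat_recr //= IH poch_rec factS natrM.
have F0 : (m`!%:R : rat) != 0 by rewrite pnatr_eq0 -lt0n fact_gt0.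
have M0 : (m.+1%:R : rat) != 0 by rewrite pnatr_eq0.
rewrite /aa -natr1.
rewrite -natr1 in M0.
field.
by rewrite F0 addrC M0.
Qed.

Lemma pochY m : exists Y : int, pochhammer aa m * 3 ^+ m = Y%:~R.
Proof.
elim: m => [|m [Y HY]]; first by exists 1; rewrite /pochhammer big_ord0 mulr1.
exists (Y * (3 * m%:Z - 1)).
rewrite poch_rec exprS intrM -HY /aa.
rewrite rmorphB /= rmorphM /=.
change ((Posz m)%:~R : rat) with (m%:R : rat).
by field.
Qed.

Lemma ndvd_fact p k : prime p -> (k < p)%N -> ~~ (p %| k`!)%N.
Proof.
move=> pp; elim: k => [|k IH] lt; first by rewrite fact0 Euclid_dvd1.
rewrite factS Euclid_dvdM // negb_or IH ?andbT; last by apply: ltnW.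
apply/negP => /dvdn_leq; rewrite ltn0Sn => /(_ isT); rewrite leqNgt lt.
by [].
Qed.

Theorem mainTheorem6 (p : nat) :
  prime p -> (p %% 3 = 2)%N ->
  rat_cong_mod
    (\sum_(0 <= k < ((p + 1) %/ 3).+1)
       (6 * k%:R - 1) * (18 * k%:R ^+ 2 - 6 * k%:R + 1)
       * (pochhammer (- (1 / 3)) k) ^+ 4 / (k`!%:R) ^+ 4)
    0 p 4.
Proof.
move=> pp p3.
set n := ((p + 1) %/ 3)%N.
have n3 : (n * 3 = p + 1)%N.
  rewrite /n; lia.
have p2 : (2 <= p)%N by apply: prime_gt1.
have np : (n < p)%N by lia.
clearbody n.
have [Y HY] := pochY n.
apply: (@key p _ (-81 * Y ^+ 4) ((3 ^ n.+1 * n`!) ^ 4)) => //.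
  rewrite Euclid_dvdX // Euclid_dvdM // andbT negb_or (@ndvd_fact p n pp np) andbT Euclid_dvdX // andbT.
  apply/negP => H; have le3 := @dvdn_leq p 3 isT H.
  have e : p = 2%N by lia.
  by rewrite e in H.
have hn : (n%:R : rat) = (p%:R + 1) / 3.
  have h3 : (n%:R : rat) * 3%:R = p%:R + 1 by rewrite -natrM n3 natrD.
  by rewrite -h3 mulfK.
have P : pochhammer aa n = Y%:~R / 3 ^+ n.
  by rewrite -HY mulfK // expf_neq0.
have := telescope n.+1; rewrite {1}/aa => ->.
rewrite poch_rec P factS.
rewrite !natrX !natrM !natrX intrM rmorphXn /=.
have F0 : (n`!%:R : rat) != 0 by rewrite pnatr_eq0 -lt0n fact_gt0.
have N0 : (n.+1%:R : rat) != 0 by rewrite pnatr_eq0.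
rewrite /aa hn.
rewrite [3 ^+ n.+1]exprS.
have T0 : (3 ^+ n : rat) != 0 by rewrite expf_neq0.
set F := (n`!%:R : rat) in F0 *.
set N1 := (n.+1%:R : rat) in N0 *.
set T := (3 ^+ n : rat) in T0 *.
clearbody F N1 T.

field.
by rewrite F0 N0 T0.
Qed.
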